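(* Let $p\ge 5$ and let $g_{j,k}\in\{1,-1\}$ for $j=1,2$ and $1\le k\le p-4$. Put $\beta_j=\sigma_1^{g_{j,1}}\sigma_2^{g_{j,2}}\cdots\sigma_{p-5}^{g_{j,p-5}}$ for $j=1,2$. Then \[\beta_1\sigma_{p-4}^{g_{1,p-4}}\sigma_{p-3}\sigma_{p-2}\sigma_{p-1}^{-1}\,\beta_2\sigma_{p-4}^{g_{2,p-4}}\sigma_{p-3}\sigma_{p-2}^{-1}\sigma_{p-1}^{-1}\ \sim_M\ \beta_1\beta_2.\]
   Context: $\sigma_1,\sigma_2,\dots$ denote the standard Artin generators of the braid groups. Two braids (possibly with different numbers of strands) are Markov equivalent, written $\sim_M$, if their closures are isotopic links. *)

(* Defs.v *)
From Stdlib Require Import Arith ZArith List Relations.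
Import ListNotations.

(* A letter (i, true) is sigma_i, (i, false) is sigma_i^{-1}. *)
Definition letter := (nat * bool)%type.
Definition word := list letter.

Definition sig (i : nat) (e : Z) : letter := (i, Z.ltb 0 e).

Definition valid (n : nat) (w : word) : Prop :=
  Forall (fun l => 1 <= fst l /\ fst l < n) w.

Inductive braid_step (n : nat) : word -> word -> Prop :=
| bs_free : forall u v i b, 1 <= i < n ->
    braid_step n (u ++ [(i, b); (i, negb b)] ++ v) (u ++ v)
| bs_far : forall u v i j b c, i + 2 <= j \/ j + 2 <= i ->
    braid_step n (u ++ [(i, b); (j, c)] ++ v) (u ++ [(j, c); (i, b)] ++ v)
| bs_braid : forall u v i,
    braid_step n (u ++ [(i, true); (S i, true); (i, true)] ++ v)
                 (u ++ [(S i, true); (i, true); (S i, true)] ++ v).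

(* A braid: number of strands together with a word. *)
Definition braid := (nat * word)%type.

Inductive markov_step : braid -> braid -> Prop :=
| ms_braid : forall n w w', valid n w -> valid n w' -> braid_step n w w' ->
    markov_step (n, w) (n, w')
| ms_conj : forall n w i b, valid n w -> 1 <= i < n ->
    markov_step (n, w) (n, [(i, b)] ++ w ++ [(i, negb b)])
| ms_stab : forall n w b, 1 <= n -> valid n w ->
    markov_step (n, w) (S n, w ++ [(n, b)]).

(* Markov equivalence ~_M : equivalence relation generated by Markov moves
   (by Markov's theorem: closures are isotopic links). *)
Definition markov_equiv : braid -> braid -> Prop :=
  clos_refl_sym_trans braid markov_step.

Definition beta (g : nat -> Z) (p : nat) : word :=
  map (fun k => sig k (g k)) (seq 1 (p - 5)).

(* Main.v *)
Require Import Defs.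
From Stdlib Require Import Arith ZArith List Lia Relations.
Import ListNotations.

Notation ME := markov_equiv.

Lemma valid_app n u v : valid n u -> valid n v -> valid n (u++v).
Proof. unfold valid; intros; apply Forall_app; auto. Qed.
Lemma valid_cons n l w : 1 <= fst l < n -> valid n w -> valid n (l::w).
Proof. unfold valid; intros; constructor; auto. Qed.
Lemma valid_nil n : valid n [].
Proof. constructor. Qed.
Lemma valid_le n m w : valid n w -> n <= m -> valid m w.
Proof. unfold valid; intros H Hm; eapply Forall_impl; [|exact H]; simpl; intros; lia. Qed.
Lemma valid_app_inv n u v : valid n (u++v) -> valid n u /\ valid n v.
Proof. unfold valid; intros; apply Forall_app; auto. Qed.
Lemma valid_cons_inv n l w : valid n (l::w) -> 1 <= fst l < n /\ valid n w.
Proof. unfold valid; intros H; inversion H; auto. Qed.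

Ltac vld := repeat (apply valid_cons || apply valid_app || apply valid_nil);
  simpl; try lia; try (eapply valid_le; [eassumption | lia]).

Ltac lnorm := simpl; repeat (rewrite <- app_assoc; simpl); rewrite ?app_nil_r; reflexivity.

Lemma ME_eq (x y x' y' : braid) : x = x' -> y = y' -> ME x' y' -> ME x y.
Proof. intros; subst; auto. Qed.
Lemma ME_trans x y z : ME x y -> ME y z -> ME x z.
Proof. apply rst_trans. Qed.
Lemma ME_sym x y : ME x y -> ME y x.
Proof. apply rst_sym. Qed.

Lemma st_free_del n u v i b : valid n (u ++ (i,b)::(i,negb b)::v) ->
  ME (n, u++(i,b)::(i,negb b)::v) (n, u++v).
Proof.
  intros H. apply rst_step. pose proof (valid_app_inv _ _ _ H) as [Hu Hr].
  apply valid_cons_inv in Hr as [Hi Hr]. apply valid_cons_inv in Hr as [_ Hv].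
  apply ms_braid; auto. apply valid_app; auto.
  exact (bs_free n u v i b Hi).
Qed.

Lemma st_far n u v l m : fst l + 2 <= fst m \/ fst m + 2 <= fst l ->
  valid n (u++l::m::v) -> ME (n,u++l::m::v) (n,u++m::l::v).
Proof.
  intros Hf H. apply rst_step. pose proof (valid_app_inv _ _ _ H) as [Hu Hr].
  apply valid_cons_inv in Hr as [Hi Hr]. apply valid_cons_inv in Hr as [Hj Hv].
  simpl in *. apply ms_braid; auto. vld.
  destruct l as [i b], m as [j c]. exact (bs_far n u v i j b c Hf).
Qed.

Lemma st_br n u v i : valid n (u++(i,true)::(S i,true)::(i,true)::v) ->
  ME (n,u++(i,true)::(S i,true)::(i,true)::v) (n,u++(S i,true)::(i,true)::(S i,true)::v).
Proof.
  intros H. apply rst_step. pose proof (valid_app_inv _ _ _ H) as [Hu Hr].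
  apply valid_cons_inv in Hr as [Hi Hr]. apply valid_cons_inv in Hr as [Hj Hr].
  apply valid_cons_inv in Hr as [_ Hv].
  simpl in *. apply ms_braid; auto. vld.
  exact (bs_braid n u v i).
Qed.

Lemma rot1 n l w : valid n (l::w) -> ME (n, l::w) (n, w++[l]).
Proof.
  intros H. destruct l as [i b]. pose proof (valid_cons_inv _ _ _ H) as [Hi Hw].
  eapply ME_trans. apply rst_step. apply (ms_conj n _ i (negb b)); auto.
  simpl in Hi. eapply ME_eq; [| |eapply (st_free_del n [] (w ++ [(i, b)]) i (negb b))].
  - simpl. rewrite Bool.negb_involutive. reflexivity.
  - reflexivity.
  - simpl. rewrite Bool.negb_involutive. vld.
Qed.

Lemma rot_block n x y : valid n (x++y) -> ME (n, x++y) (n, y++x).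
Proof.
  revert y; induction x as [|l x IH]; intros y H.
  - rewrite app_nil_r. apply rst_refl.
  - eapply ME_trans. apply rot1. exact H.
    eapply ME_eq; [| |apply (IH (y++[l]))].
    + f_equal. rewrite <- app_assoc. reflexivity.
    + f_equal. rewrite <- app_assoc. reflexivity.
    + pose proof (valid_cons_inv _ _ _ H) as [Hi Hw].
      apply valid_app_inv in Hw as [Hx Hy]. vld.
Qed.

Lemma comm_block n u w v l : valid n (u ++ l :: w ++ v) ->
  Forall (fun m => fst l + 2 <= fst m \/ fst m + 2 <= fst l) w ->
  ME (n, u++l::w++v) (n, u++w++l::v).
Proof.
  revert u; induction w as [|m w IH]; intros u H Hf.
  - apply rst_refl.
  - inversion Hf; subst. simpl. eapply ME_trans. apply st_far; auto.
    eapply ME_eq; [| |apply (IH (u++[m]))]; auto.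
    + f_equal. rewrite <- app_assoc. reflexivity.
    + f_equal. rewrite <- app_assoc. reflexivity.
    + apply valid_app_inv in H as [Hu H]. apply valid_cons_inv in H as [Hl H].
      apply valid_cons_inv in H as [Hm H]. apply valid_app_inv in H as [Hw Hv]. vld.
Qed.

Lemma destab n w b : 1 <= n -> valid n w -> ME (S n, w ++ [(n,b)]) (n, w).
Proof. intros; apply rst_sym, rst_step, ms_stab; auto. Qed.

Lemma far_valid c w i : valid c w -> c + 1 <= i ->
  Forall (fun m => i + 2 <= fst m \/ fst m + 2 <= i) w.
Proof. unfold valid; intros H Hi; eapply Forall_impl; [|exact H]; simpl; intros; lia. Qed.

Ltac del U i b := eapply ME_trans; [eapply ME_eq; [ | | eapply (st_free_del _ U _ i b)]; [lnorm | reflexivity | vld] | ].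
Ltac far U l m := eapply ME_trans; [eapply ME_eq; [ | | eapply (st_far _ U _ l m)]; [lnorm | reflexivity | simpl; lia | vld] | ].
Ltac br U i := eapply ME_trans; [eapply ME_eq; [ | | eapply (st_br _ U _ i)]; [lnorm | reflexivity | vld] | ].
Ltac brR U i := eapply ME_trans; [eapply ME_eq; [ | | apply ME_sym; eapply (st_br _ U _ i)]; [lnorm | reflexivity | vld] | ].
Ltac fin := eapply ME_eq; [reflexivity | | apply rst_refl]; lnorm.

Definition T := true.
Definition F := false.

Lemma D1 n u v i : valid n u -> valid n v -> 1 <= i -> S i < n ->
  ME (n, u ++ (S i,false)::(i,false)::(S i,false)::v) (n, u ++ (i,false)::(S i,false)::(i,false)::v).
Proof.
  intros Hu Hv H1 H2.
  apply ME_trans with (n, u ++ (i,false)::(S i,false)::(i,false)::(i,true)::(S i,true)::(i,true)::(S i,false)::(i,false)::(S i,false)::v).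
  - apply ME_sym.
    del (u ++ [(i,false);(S i,false)]) i false.
    del (u ++ [(i,false)]) (S i) false.
    del u i false.
    fin.
  - br (u ++ [(i,false);(S i,false);(i,false)]) i.
    del (u ++ [(i,false);(S i,false);(i,false);(S i,true);(i,true)]) (S i) true.
    del (u ++ [(i,false);(S i,false);(i,false);(S i,true)]) i true.
    del (u ++ [(i,false);(S i,false);(i,false)]) (S i) true.
    fin.
Qed.

Lemma D2 n u v i : valid n u -> valid n v -> 1 <= i -> S i < n ->
  ME (n, u ++ (S i,true)::(i,true)::(S i,false)::v) (n, u ++ (i,false)::(S i,true)::(i,true)::v).
Proof.
  intros Hu Hv H1 H2.
  apply ME_trans with (n, u ++ (i,false)::(S i,true)::(i,true)::(S i,true)::(S i,false)::v).
  - apply ME_sym.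
    brR (u ++ [(i,false)]) i.
    del u i false.
    fin.
  - del (u ++ [(i,false);(S i,true);(i,true)]) (S i) true.
    fin.
Qed.

Lemma D4 n u v i : valid n u -> valid n v -> 1 <= i -> S i < n ->
  ME (n, u ++ (S i,true)::(i,false)::(S i,false)::v) (n, u ++ (i,false)::(S i,false)::(i,true)::v).
Proof.
  intros Hu Hv H1 H2.
  apply ME_trans with (n, u ++ (S i,true)::(i,false)::(S i,false)::(i,false)::(i,true)::v).
  - apply ME_sym.
    del (u ++ [(S i,true);(i,false);(S i,false)]) i false.
    fin.
  - eapply ME_trans; [eapply ME_eq; [| | apply ME_sym; eapply (D1 _ (u ++ [(S i,true)]) _ i)]; [lnorm|reflexivity| vld | vld | lia | lia] |].
    del u (S i) true.
    fin.
Qed.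

Lemma D24 n u v i c : valid n u -> valid n v -> 1 <= i -> S i < n ->
  ME (n, u ++ (S i,true)::(i,c)::(S i,false)::v) (n, u ++ (i,false)::(S i,c)::(i,true)::v).
Proof. destruct c; [apply D2 | apply D4]. Qed.

Lemma D3 n u v i : valid n u -> valid n v -> 1 <= i -> S i < n ->
  ME (n, u ++ (i,true)::(S i,false)::v) (n, u ++ (S i,false)::(i,false)::(S i,true)::(i,true)::v).
Proof.
  intros Hu Hv H1 H2. apply ME_sym.
  eapply ME_trans; [eapply ME_eq; [| | apply ME_sym; eapply (D2 _ (u ++ [(S i,false)]) _ i)]; [lnorm|reflexivity| vld | vld | lia | lia] |].
  del u (S i) false.
  fin.
Qed.

Ltac cb U W V L := eapply ME_trans; [eapply ME_eq; [| | eapply (comm_block _ U W V L)]; [lnorm | reflexivity | vld |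
   repeat (apply Forall_app; split); try (eapply far_valid; [eassumption | simpl; lia]); repeat (apply Forall_cons; [simpl; lia|]); apply Forall_nil ] |].
Ltac rb Xx Yy := eapply ME_trans; [eapply ME_eq; [| reflexivity | eapply (rot_block _ Xx Yy)]; [lnorm | vld] |].
Ltac dst N Wd b := eapply ME_trans; [eapply ME_eq; [ | reflexivity | eapply (destab N Wd b)]; [lnorm | lia | vld] |].
Ltac dl lem U i := eapply ME_trans; [eapply ME_eq; [| | eapply (lem _ U _ i)]; [lnorm|reflexivity| vld | vld | lia | lia] |].

Lemma main n X Z a b : 1 <= n -> valid n X -> valid n Z ->
  ME (S (S (S (S n))), X ++ (n,a)::(S n,true)::(S (S n),true)::(S (S (S n)),false)::Z ++
                          (n,b)::(S n,true)::(S (S n),false)::(S (S (S n)),false)::[])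
     (n, X ++ Z).
Proof.
  intros Hn HX HZ.
  cb (X ++ [(n,a);(S n,true);(S (S n),true)]) (Z ++ [(n,b);(S n,true)]) [(S (S n),false);(S (S (S n)),false)] (S (S (S n)),false).
  dl D1 (X ++ (n,a)::(S n,true)::(S (S n),true)::Z ++ [(n,b);(S n,true)]) (S (S n)).
  rb (X ++ (n,a)::(S n,true)::(S (S n),true)::Z ++ [(n,b);(S n,true);(S (S n),false);(S (S (S n)),false)]) [(S (S n),false)].
  dst (S (S (S n))) ((S (S n),false) :: X ++ (n,a)::(S n,true)::(S (S n),true)::Z ++ [(n,b);(S n,true);(S (S n),false)]) false.
  rb [(S (S n),false)] (X ++ (n,a)::(S n,true)::(S (S n),true)::Z ++ [(n,b);(S n,true);(S (S n),false)]).
  cb (X ++ [(n,a);(S n,true)]) Z [(n,b);(S n,true);(S (S n),false);(S (S n),false)] (S (S n),true).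
  cb (X ++ [(n,a)]) Z [(S (S n),true);(n,b);(S n,true);(S (S n),false);(S (S n),false)] (S n,true).
  far (X ++ (n,a)::Z ++ [(S n,true)]) (S (S n),true) (n,b).
  dl D2 (X ++ (n,a)::Z ++ [(S n,true);(n,b)]) (S n).
  dl D3 (X ++ (n,a)::Z ++ [(S n,true);(n,b);(S n,false);(S (S n),true)]) (S n).
  del (X ++ (n,a)::Z ++ [(S n,true);(n,b);(S n,false)]) (S (S n)) true.
  rb (X ++ (n,a)::Z ++ [(S n,true);(n,b);(S n,false);(S n,false);(S (S n),true)]) [(S n,true)].
  dst (S (S n)) ((S n,true) :: X ++ (n,a)::Z ++ [(S n,true);(n,b);(S n,false);(S n,false)]) true.
  rb [(S n,true)] (X ++ (n,a)::Z ++ [(S n,true);(n,b);(S n,false);(S n,false)]).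
  del (X ++ (n,a)::Z ++ [(S n,true);(n,b);(S n,false)]) (S n) false.
  eapply ME_trans; [eapply ME_eq; [| | eapply (D24 _ (X ++ (n,a)::Z) _ n b)]; [lnorm|reflexivity| vld | vld | lia | lia] |].
  rb (X ++ (n,a)::Z ++ [(n,false);(S n,b)]) [(n,true)].
  dst (S n) ((n,true) :: X ++ (n,a)::Z ++ [(n,false)]) b.
  rb [(n,true)] (X ++ (n,a)::Z ++ [(n,false)]).
  del (X ++ (n,a)::Z) n false.
  rb X ((n,a)::Z).
  rb [(n,a)] (Z ++ X).
  dst n (Z ++ X) a.
  rb Z X.
  fin.
Qed.

Lemma beta_valid g p : valid (p - 4) (beta g p).
Proof.
  unfold valid, beta. apply Forall_forall. intros x Hx.
  apply in_map_iff in Hx as [k [<- Hk]]. apply in_seq in Hk. simpl. lia.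
Qed.

Theorem lemma3p3 (p : nat) (g1 g2 : nat -> Z) :
  5 <= p ->
  (forall k, 1 <= k <= p - 4 -> g1 k = 1%Z \/ g1 k = (-1)%Z) ->
  (forall k, 1 <= k <= p - 4 -> g2 k = 1%Z \/ g2 k = (-1)%Z) ->
  markov_equiv
    (p, beta g1 p ++ [sig (p - 4) (g1 (p - 4)); sig (p - 3) 1; sig (p - 2) 1; sig (p - 1) (-1)]
        ++ beta g2 p ++ [sig (p - 4) (g2 (p - 4)); sig (p - 3) 1; sig (p - 2) (-1); sig (p - 1) (-1)])
    (p - 4, beta g1 p ++ beta g2 p).
Proof.
  intros Hp _ _.
  pose proof (beta_valid g1 p) as H1. pose proof (beta_valid g2 p) as H2.
  revert H1 H2.
  generalize (beta g1 p) (beta g2 p). intros X Z HX HZ.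
  unfold sig. change (Z.ltb 0 1) with true. change (Z.ltb 0 (-1)) with false.
  generalize (Z.ltb 0 (g1 (p - 4))) (Z.ltb 0 (g2 (p - 4))). intros a b.
  replace (p - 3) with (S (p - 4)) by lia.
  replace (p - 2) with (S (S (p - 4))) by lia.
  replace (p - 1) with (S (S (S (p - 4)))) by lia.
  assert (Hq : p = S (S (S (S (p - 4))))) by lia.
  assert (Hn : 1 <= p - 4) by lia.
  revert Hn Hq HX HZ. generalize (p - 4). intros n Hn Hq HX HZ. subst p.
  apply (main n X Z a b); auto.
Qed.
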